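(* There is a constant $c>0$ such that every haircomb tree on $n$ vertices contains a pair of disjoint homometric sets, each of size at least $c\,n^{2/3}$.
   Context: All graphs are finite and simple. For a graph $G=(V,E)$ and $V'\subseteq V$, the profile of $V'$ is the multiset of distances $d_G(u,v)$ over all unordered pairs $\{u,v\}$ of distinct vertices of $V'$. Two disjoint subsets $A,B\subseteq V$ are homometric if their profiles are equal; the size of the pair is $|A|=|B|$. A haircomb is a tree consisting of a collection of vertex-disjoint paths $P_1,\dots,P_m$ (called legs, each with at least one vertex) such that for each $1\le i<m$ the first vertex of $P_i$ and the first vertex of $P_{i+1}$ are joined by an edge, and there are no other edges. *)

(* Defs.v *)
From mathcomp Require Import all_boot.
From Stdlib Require Import Reals.
Set Implicit Arguments. Unset Strict Implicit. Unset Printing Implicit Defensive.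

(* For haircombs the relation is pinned down exactly
   (symmetric and irreflexive follows from the definition). *)

Definition walkb (T : finType) (e : rel T) (k : nat) (x y : T) : bool :=
  [exists p : k.-tuple T, path e x p && (last x p == y)].

(* A shortest walk has < #|T| edges, so searching k in 0..#|T|-1 suffices;
   [find] over [iota 0 #|T|] returns exactly that least k (and #|T| if y is
   unreachable, which never happens in a connected graph such as a tree). *)
Definition dist (T : finType) (e : rel T) (x y : T) : nat :=
  find (fun k => walkb e k x y) (iota 0 #|T|).

Fixpoint pairs (T : Type) (s : seq T) : seq (T * T) :=
  match s with
  | [::] => [::]
  | x :: s' => [seq (x, y) | y <- s'] ++ pairs s'
  end.

(* Profile of A: multiset (as a seq, compared up to permutation) of the
   distances over all unordered pairs of distinct vertices of A. *)
Definition profile (T : finType) (e : rel T) (A : {set T}) : seq nat :=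
  [seq dist e p.1 p.2 | p <- pairs (enum A)].

Definition homometric (T : finType) (e : rel T) (A B : {set T}) : Prop :=
  [disjoint A & B] /\ #|A| = #|B| /\ perm_eq (profile e A) (profile e B).

Definition consecutive (T : Type) (l : seq T) (x y : T) : Prop :=
  exists l1 l2, l = l1 ++ x :: y :: l2 \/ l = l1 ++ y :: x :: l2.

Definition haircomb (T : finType) (e : rel T) : Prop :=
  exists P : seq (seq T),
    [/\ P != [::],
        all (fun l => l != [::]) P,
        uniq (flatten P),
        (forall x : T, x \in flatten P) &
        (forall x y : T, e x y <->
           ((exists2 l, l \in P & consecutive l x y) \/
            (exists P1 P2 l1 l2,
                P = P1 ++ (x :: l1) :: (y :: l2) :: P2 \/
                P = P1 ++ (y :: l1) :: (x :: l2) :: P2)))].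

(* Main.v *)
Require Import Defs.
From mathcomp Require Import all_boot.
From Stdlib Require Import Reals.
From mathcomp Require Import zify.
From Stdlib Require Import Lia Lra Psatz.
Set Implicit Arguments. Unset Strict Implicit. Unset Printing Implicit Defensive.

Lemma nth_flatten_inj (T : eqType) (x0 : T) (P : seq (seq T)) i j d d' :
  uniq (flatten P) -> i < size P -> j < size P ->
  d < size (nth [::] P i) -> d' < size (nth [::] P j) ->
  nth x0 (nth [::] P i) d = nth x0 (nth [::] P j) d' -> i = j /\ d = d'.
Proof.
elim: P i j => [|l P IH] [|i] [|j] //=; rewrite cat_uniq => /and3P[ul dis uP] Hi Hj Hd Hd' E.
- by split => //; apply/eqP; rewrite -(nth_uniq x0 Hd Hd' ul) E.
- exfalso; move/negP: dis; apply; apply/hasP; exists (nth x0 (nth [::] P j) d').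
    by apply/flattenP; exists (nth [::] P j); rewrite ?mem_nth.
  by rewrite /= -E mem_nth.
- exfalso; move/negP: dis; apply; apply/hasP; exists (nth x0 (nth [::] P i) d).
    by apply/flattenP; exists (nth [::] P i); rewrite ?mem_nth.
  by rewrite /= E mem_nth.
- by case: (IH i j uP Hi Hj Hd Hd' E) => -> ->.
Qed.

Lemma sum_leg_le (T : eqType) (Q : seq (seq T)) j :
  all (fun l => l != [::]) Q -> j < size Q -> size (nth [::] Q j) + j <= sumn (map size Q).
Proof.
elim: Q j => [|l Q IH] [|j] //=.
- move=> _ _; lia.
- move=> /andP[ln an] jl; have := IH j an jl.
  have : 0 < size l by rewrite lt0n size_eq0.
  lia.
Qed.

Lemma sum_leg2_le (T : eqType) (Q : seq (seq T)) i j :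
  all (fun l => l != [::]) Q -> i < j -> j < size Q ->
  size (nth [::] Q i) + size (nth [::] Q j) + (j - i - 1) <= sumn (map size Q).
Proof.
elim: Q i j => [|l Q IH] [|i] [|j] //=.
- move=> /andP[ln an] _ jl; have := sum_leg_le an jl; lia.
- move=> /andP[ln an] ij jl; have := IH i j an ij jl; lia.
Qed.

Lemma sum_leg1_le (T : Type) (Q : seq (seq T)) i :
  i < size Q -> size (nth [::] Q i) <= sumn (map size Q).
Proof.
elim: Q i => [|l Q IH] [|i] //=.
- move=> _; lia.
- move=> il; have := IH i il; lia.
Qed.

Lemma split2 (A : Type) (x0 : A) (l : seq A) d : d.+1 < size l ->
  l = take d l ++ nth x0 l d :: nth x0 l d.+1 :: drop d.+2 l.
Proof.
move=> H; rewrite -{1}(cat_take_drop d l); congr (_ ++ _).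
rewrite (drop_nth x0) ?(drop_nth x0 (n := d.+1)) //; lia.
Qed.

Lemma headE (A : Type) (x0 : A) (l : seq A) : size l > 0 -> l = nth x0 l 0 :: behead l.
Proof. by case: l. Qed.

Lemma nth_mid (A : Type) (x0 : A) l1 a b l2 :
  nth x0 (l1 ++ a :: b :: l2) (size l1) = a /\ nth x0 (l1 ++ a :: b :: l2) (size l1).+1 = b.
Proof. by rewrite !nth_cat ltnn ltnNge leqnSn /= subnn subSnn. Qed.

Definition mp (A : Type) (f : A -> A -> nat) (s : seq A) := [seq f p.1 p.2 | p <- pairs s].

Lemma mp_cons (A : Type) (f : A -> A -> nat) x s : mp f (x :: s) = [seq f x y | y <- s] ++ mp f s.
Proof. by rewrite /mp /= map_cat -map_comp. Qed.

Lemma mp_mid (A : Type) (f : A -> A -> nat) (fs : forall x y, f x y = f y x) x t1 t2 :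
  perm_eq (mp f (t1 ++ x :: t2)) (mp f (x :: t1 ++ t2)).
Proof.
elim: t1 => [|a t1 IH] /=; first exact: perm_refl.
move/permP: IH => IH; apply/permP => c.
rewrite !mp_cons !count_cat IH !mp_cons !count_cat /= !map_cat !count_cat /= (fs a x); lia.
Qed.

Lemma mp_perm (A : eqType) (f : A -> A -> nat) (fs : forall x y, f x y = f y x) s t :
  perm_eq s t -> perm_eq (mp f s) (mp f t).
Proof.
elim: s t => [|x s IH] t.
- by rewrite perm_sym => /perm_nilP ->.
- move=> H; have xt : x \in t by rewrite -(perm_mem H) mem_head.
  case/splitPr: xt H => t1 t2 H.
  have H' : perm_eq s (t1 ++ t2).
    by rewrite -(perm_cons x); apply: (perm_trans H); rewrite -cat1s perm_catCA.
  rewrite perm_sym; apply: (perm_trans (mp_mid fs x t1 t2)).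
  rewrite !mp_cons perm_sym; apply: perm_cat; [exact: perm_map | exact: IH].
Qed.

Lemma mp_map (A B : Type) (f : B -> B -> nat) (g : A -> B) s :
  mp f (map g s) = mp (fun a b => f (g a) (g b)) s.
Proof. by elim: s => [|x s IH] //; rewrite /= !mp_cons IH -map_comp. Qed.

Lemma eq_mp_in (A : eqType) (f g : A -> A -> nat) s :
  (forall a b, a \in s -> b \in s -> f a b = g a b) -> mp f s = mp g s.
Proof.
elim: s => [|x s IH] // H; rewrite !mp_cons; congr (_ ++ _).
  by apply/eq_in_map => y ys; apply: H; rewrite ?mem_head ?inE ?ys ?orbT.
by apply: IH => a b As Bs; apply: H; rewrite inE ?As ?Bs orbT.
Qed.

Definition wf (L : nat -> nat) (m s : nat) (b : bool) (i : nat) : nat :=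
  if (i + s < m) && (odd (i %/ s) == b) then minn (L i) (L (i + s)) else 0.

Lemma pick1 m (k : nat) (G : nat -> nat) :
  \sum_(j < m) (if (j : nat) == k then G j else 0) = if k < m then G k else 0.
Proof.
elim: m => [|m IH]; first by rewrite big_ord0.
rewrite big_ord_recr /= IH.
case: (ltngtP k m) => h.
- by rewrite (ltn_trans h (ltnSn m)) addn0.
- by rewrite ltnNge h.
- by subst k; rewrite ltnSn.
Qed.

Lemma pick_shift m (i j c : nat) : j < m ->
  \sum_(s < m) (if j == i + s then c else 0) = if i <= j then c else 0.
Proof.
move=> jm; case: (leqP i j) => ij.
- rewrite (eq_bigr (fun s : 'I_m => if (s : nat) == j - i then c else 0)).
    by rewrite pick1; have -> : j - i < m by lia.
  move=> s _; have -> : (j == i + s) = ((s : nat) == j - i) by apply/eqP/eqP => ?; lia.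
  by [].
- rewrite big1 // => s _; have -> : (j == i + s) = false by apply/eqP; lia.
  by [].
Qed.

Lemma arith_bound (L : nat -> nat) m X :
  0 < m -> (forall i, i < m -> 0 < L i) ->
  (forall i, i < m -> L i %/ 2 <= X) ->
  (forall s b, 0 < s -> s < m -> \sum_(i < m) wf L m s b i <= X) ->
  forall n, n = \sum_(i < m) L i ->
  n * n <= (2 * X + 1) * (2 * ((2 * X + 1) * (2 * X + 1) + 4 * X * X)).
Proof.
move=> m0 Lp Lh Wh n En.
set M := 2 * X + 1.
have LM : forall i, i < m -> L i <= M by move=> i im; have := Lh i im; rewrite /M; lia.
pose F i j := minn (L i) (L j).
pose W s := \sum_(i < m) (if i + s < m then F i (i + s) else 0).
have Wle : forall s, 0 < s -> s < m -> W s <= 2 * X.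
  move=> s s0 sm; have := Wh s true s0 sm; have := Wh s false s0 sm.
  have -> : W s = \sum_(i < m) wf L m s true i + \sum_(i < m) wf L m s false i.
    rewrite /W -big_split /=; apply: eq_bigr => i _; rewrite /wf.
    by case: (odd _); case: (_ + s < m); rewrite /= ?addn0.
  lia.
have h1 : n * n <= M * \sum_(i < m) \sum_(j < m) F i j.
  rewrite En big_distrl /= big_distrr /=; apply: leq_sum => i _.
  rewrite big_distrr /= big_distrr /=; apply: leq_sum => j _.
  have := LM i (ltn_ord i); have := LM j (ltn_ord j); rewrite /F /minn.
  case: ltnP => _; nia.
have h2 : \sum_(i < m) \sum_(j < m) F i j <= 2 * \sum_(s < m) W s.
  have eW : \sum_(s < m) W s = \sum_(i < m) \sum_(j < m) (if i <= j then F i j else 0).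
    rewrite /W exchange_big /=; apply: eq_bigr => i _.
    rewrite (eq_bigr (fun s : 'I_m => \sum_(j < m) (if (j : nat) == i + s then F i j else 0))); last first.
      by move=> s _; rewrite (pick1 m (i + s) (F i)).
    rewrite exchange_big /=; apply: eq_bigr => j _.
    rewrite -(pick_shift i (F i j) (ltn_ord j)); apply: eq_bigr => s _.
    by case: eqP => // ->.
  rewrite eW.
  have -> : \sum_(i < m) \sum_(j < m) F i j =
            \sum_(i < m) \sum_(j < m) (if i <= j then F i j else 0) +
            \sum_(i < m) \sum_(j < m) (if j < i then F i j else 0).
    rewrite -big_split /=; apply: eq_bigr => i _; rewrite -big_split /=; apply: eq_bigr => j _.
    by case: leqP => _; rewrite ?addn0.
  suff : \sum_(i < m) \sum_(j < m) (if j < i then F i j else 0) <=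
         \sum_(i < m) \sum_(j < m) (if i <= j then F i j else 0) by lia.
  rewrite exchange_big /=; apply: leq_sum => i _; apply: leq_sum => j _.
  rewrite /F minnC; case: ltnP => h //; by rewrite (ltnW h).
have h3 : \sum_(s < m) W s <= n + (m - 1) * (2 * X).
  have [m' Em] : exists m', m = m'.+1 by exists m.-1; lia.
  rewrite Em big_ord_recl.
  have -> : W 0 = n.
    by rewrite /W En; apply: eq_bigr => i _; rewrite addn0 ltn_ord /F minnn.
  have : \sum_(s < m') W (lift ord0 s) <= \sum_(s < m') (2 * X).
    apply: leq_sum => s _; apply: Wle; rewrite lift0 //; have := ltn_ord s; lia.
  rewrite sum_nat_const card_ord; lia.
have h4 : m <= M.
  case: (leqP m 1) => m1; first by rewrite /M; lia.
  have := Wle 1 (ltnSn 0) m1.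
  suff : m - 1 <= W 1 by rewrite /M; lia.
  have [m' Em] : exists m', m = m'.+1 by exists m.-1; lia.
  rewrite /W Em big_ord_recr /=.
  have -> : (m' + 1 < m'.+1) = false by rewrite addn1 ltnn.
  rewrite addn0.
  have : \sum_(i < m') 1 <= \sum_(i < m') (if (i : nat) + 1 < m'.+1 then F i (i + 1) else 0).
    apply: leq_sum => i _; have := ltn_ord i => io.
    have -> : (i : nat) + 1 < m'.+1 by lia.
    rewrite /F; have := Lp i ltac:(lia); have := Lp (i + 1) ltac:(lia).
    by rewrite /minn => a b; case: ifP.
  rewrite sum_nat_const card_ord => H; apply: leq_trans H; lia.
have h5 : n <= m * M.
  have : n <= \sum_(i < m) M by rewrite En; apply: leq_sum => i _; exact: LM.
  by rewrite sum_nat_const card_ord.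
have h6 : n <= M * M by apply: (leq_trans h5); rewrite leq_mul2r h4 orbT.
have h7 : (m - 1) * (2 * X) <= 2 * X * (2 * X) by rewrite mulnC leq_mul2l; rewrite /M in h4; apply/orP; right; lia.
rewrite -/M; nia.
Qed.

Lemma real_bound (n X : nat) : 2 <= n ->
  n * n <= (2 * X + 1) * (2 * ((2 * X + 1) * (2 * X + 1) + 4 * X * X)) ->
  (1 / 5 * Rpower (INR n) (2 / 3) <= INR X)%R.
Proof.
move=> n2 H.
have X1 : 1 <= X by case: X H => //= H; lia.
have H2 : n * n <= 100 * (X * X * X) by nia.
have Hn : (0 < INR n)%R by apply: lt_0_INR; apply/ltP; lia.
set y := Rpower (INR n) (2 / 3).
have yp : (0 < y)%R by rewrite /y /Rpower; apply: exp_pos.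
have y3 : (y ^ 3 = INR n ^ 2)%R.
  rewrite -(Rpower_pow 3 _ yp) /y Rpower_mult -(Rpower_pow 2 _ Hn); congr Rpower.
  simpl; field.
have H3 : (INR n ^ 2 <= 100 * INR X ^ 3)%R.
  have := le_INR _ _ (elimT leP H2); rewrite !mult_INR (INR_IZR_INZ 100) /=.
  lra.
have X0 : (1 <= INR X)%R by apply: (le_INR 1); apply/leP.
apply: Rnot_lt_le => Hc.
have : (INR X ^ 3 <= (1 / 5 * y) ^ 3)%R.
  apply: pow_incr; lra.
have : (0 < INR X ^ 3)%R by apply: pow_lt; lra.
rewrite (_ : (1 / 5 * y) ^ 3 = y ^ 3 / 125)%R; last by field.
rewrite y3; lra.
Qed.

Definition Dc (i d j d' : nat) : nat :=
  if i == j then (d - d') + (d' - d) else (i - j) + (j - i) + d + d'.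

Definition adj (i d j d' : nat) : bool :=
  ((i == j) && ((d == d'.+1) || (d' == d.+1))) ||
  [&& d == 0, d' == 0 & ((i == j.+1) || (j == i.+1))].

Lemma Dc_sym i d j d' : Dc i d j d' = Dc j d' i d.
Proof. rewrite /Dc eq_sym; case: eqP => _; lia. Qed.

Lemma Dc_refl i d : Dc i d i d = 0.
Proof. rewrite /Dc eqxx; lia. Qed.

Lemma adjP i d j d' : adj i d j d' ->
  (i = j /\ (d = d'.+1 \/ d' = d.+1)) \/ (d = 0 /\ d' = 0 /\ (i = j.+1 \/ j = i.+1)).
Proof.
rewrite /adj => /orP[/andP[/eqP ? /orP[/eqP ?|/eqP ?]]|/and3P[/eqP ? /eqP ? /orP[/eqP ?|/eqP ?]]]; tauto.
Qed.

Lemma Dc_lip i d j d' k f : adj i d j d' -> Dc i d k f <= Dc j d' k f + 1.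
Proof.
move/adjP=> H; rewrite /Dc; case: (i =P k) => ?; case: (j =P k) => ?; lia.
Qed.

Lemma Dc0 i d j d' : Dc i d j d' = 0 -> i = j /\ d = d'.
Proof. rewrite /Dc; case: (i =P j) => ?; lia. Qed.

Lemma adjI i d j d' :
  (i = j /\ (d = d'.+1 \/ d' = d.+1)) \/ (d = 0 /\ d' = 0 /\ (i = j.+1 \/ j = i.+1)) -> adj i d j d'.
Proof. by move=> [[-> [->|->]]|[-> [-> [->|->]]]]; rewrite /adj !eqxx ?orbT. Qed.

Lemma find_first (a : pred nat) k N : k < N -> a k -> (forall j, j < k -> ~~ a j) ->
  find a (iota 0 N) = k.
Proof.
move=> kN ak na; rewrite -(subnKC (ltnW kN)) iotaD find_cat.
have -> : has a (iota 0 k) = false.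
  by apply/negbTE/hasPn => j; rewrite mem_iota => /andP[_ jk]; exact: na.
rewrite size_iota add0n.
have -> : N - k = (N - k - 1).+1 by lia.
by rewrite /= ak addn0.
Qed.

Section HC.
Variables (T : finType) (e : rel T) (P : seq (seq T)) (x0 : T).
Hypotheses (Pne : all (fun l => l != [::]) P) (Pu : uniq (flatten P))
  (Pc : forall x, x \in flatten P)
  (He : forall x y : T, e x y <->
           ((exists2 l, l \in P & consecutive l x y) \/
            (exists P1 P2 l1 l2,
                P = P1 ++ (x :: l1) :: (y :: l2) :: P2 \/
                P = P1 ++ (y :: l1) :: (x :: l2) :: P2))).

Definition L i := size (nth [::] P i).
Definition V i d := nth x0 (nth [::] P i) d.
Definition valid i d := (i < size P) && (d < L i).
Definition cI x := find (fun l => x \in l) P.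
Definition cD x := index x (nth [::] P (cI x)).

Lemma Lpos i : i < size P -> 0 < L i.
Proof. by move=> iP; rewrite /L lt0n size_eq0; apply: (allP Pne); rewrite mem_nth. Qed.

Lemma V_inj i d j d' : valid i d -> valid j d' -> V i d = V j d' -> i = j /\ d = d'.
Proof. by move=> /andP[? ?] /andP[? ?]; apply: nth_flatten_inj. Qed.

Lemma coordP x : valid (cI x) (cD x) /\ V (cI x) (cD x) = x.
Proof.
have hx : has (fun l => x \in l) P.
  by case/flattenP: (Pc x) => l lP xl; apply/hasP; exists l.
have := nth_find [::] hx; rewrite -/(cI x) => xin.
split; last by rewrite /V /cD nth_index.
by rewrite /valid /L /cD index_mem xin andbT /cI -has_find hx.
Qed.

Lemma coord_V i d : valid i d -> cI (V i d) = i /\ cD (V i d) = d.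
Proof.
move=> vd; case: (coordP (V i d)) => vc Vc.
by case: (V_inj vc vd Vc) => -> ->.
Qed.

Lemma in_P_idx l : l \in P -> exists k, k < size P /\ nth [::] P k = l.
Proof. by move=> lP; exists (index l P); rewrite index_mem nth_index. Qed.

Lemma edge_V i d j d' : valid i d -> valid j d' -> e (V i d) (V j d') <-> adj i d j d'.
Proof.
move=> vi vj; split.
- move/He => [[l lP [l1 [l2 [E|E]]]] | [P1 [P2 [l1 [l2 [E|E]]]]]].
  + case: (in_P_idx lP) => k [kP Ek]; case: (nth_mid x0 l1 (V i d) (V j d') l2) => E1 E2.
    have vk1 : valid k (size l1) by rewrite /valid kP /L Ek E size_cat /=; lia.
    have vk2 : valid k (size l1).+1 by rewrite /valid kP /L Ek E size_cat /=; lia.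
    have h1 : V k (size l1) = V i d by rewrite /V Ek E E1.
    have h2 : V k (size l1).+1 = V j d' by rewrite /V Ek E E2.
    case: (V_inj vk1 vi h1) => <- <-; case: (V_inj vk2 vj h2) => <- <-.
    by rewrite /adj eqxx eqxx orbT.
  + case: (in_P_idx lP) => k [kP Ek]; case: (nth_mid x0 l1 (V j d') (V i d) l2) => E1 E2.
    have vk1 : valid k (size l1) by rewrite /valid kP /L Ek E size_cat /=; lia.
    have vk2 : valid k (size l1).+1 by rewrite /valid kP /L Ek E size_cat /=; lia.
    have h1 : V k (size l1) = V j d' by rewrite /V Ek E E1.
    have h2 : V k (size l1).+1 = V i d by rewrite /V Ek E E2.
    case: (V_inj vk1 vj h1) => <- <-; case: (V_inj vk2 vi h2) => <- <-.
    by rewrite /adj eqxx eqxx.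
  + case: (nth_mid [::] P1 (V i d :: l1) (V j d' :: l2) P2) => E1 E2.
    have vk1 : valid (size P1) 0 by rewrite /valid /L E size_cat E1 /=; lia.
    have vk2 : valid (size P1).+1 0 by rewrite /valid /L E size_cat E2 /=; lia.
    have h1 : V (size P1) 0 = V i d by rewrite {1}/V {1}E E1.
    have h2 : V (size P1).+1 0 = V j d' by rewrite {1}/V {1}E E2.
    case: (V_inj vk1 vi h1) => <- <-; case: (V_inj vk2 vj h2) => <- <-.
    by rewrite /adj !eqxx !orbT.
  + case: (nth_mid [::] P1 (V j d' :: l1) (V i d :: l2) P2) => E1 E2.
    have vk1 : valid (size P1) 0 by rewrite /valid /L E size_cat E1 /=; lia.
    have vk2 : valid (size P1).+1 0 by rewrite /valid /L E size_cat E2 /=; lia.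
    have h1 : V (size P1) 0 = V j d' by rewrite {1}/V {1}E E1.
    have h2 : V (size P1).+1 0 = V i d by rewrite {1}/V {1}E E2.
    case: (V_inj vk1 vj h1) => <- <-; case: (V_inj vk2 vi h2) => <- <-.
    by rewrite /adj !eqxx !orbT.
- move: vi vj; rewrite /adj /valid /L /V.
  move=> /andP[iP di] /andP[jP dj].
  case/orP => [/andP[/eqP ij /orP[/eqP dd|/eqP dd]] | /and3P[/eqP d0 /eqP d'0 /orP[/eqP ij|/eqP ij]]].
  + subst j d; apply/He; left; exists (nth [::] P i); first by rewrite mem_nth.
    exists (take d' (nth [::] P i)), (drop d'.+2 (nth [::] P i)); right.
    exact: split2.
  + subst j d'; apply/He; left; exists (nth [::] P i); first by rewrite mem_nth.
    exists (take d (nth [::] P i)), (drop d.+2 (nth [::] P i)); left.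
    exact: split2.
  + subst i d d'; apply/He; right.
    exists (take j P), (drop j.+2 P), (behead (nth [::] P j)), (behead (nth [::] P j.+1)); right.
    rewrite -(headE x0 (Lpos jP)) -(headE x0 (Lpos iP)).
    exact: split2.
  + subst j d d'; apply/He; right.
    exists (take i P), (drop i.+2 P), (behead (nth [::] P i)), (behead (nth [::] P i.+1)); left.
    rewrite -(headE x0 (Lpos iP)) -(headE x0 (Lpos jP)).
    exact: split2.
Qed.


Definition Dist x y := Dc (cI x) (cD x) (cI y) (cD y).

Lemma Dist_V i d j d' : valid i d -> valid j d' -> Dist (V i d) (V j d') = Dc i d j d'.
Proof. by move=> vi vj; rewrite /Dist; case: (coord_V vi) => -> ->; case: (coord_V vj) => -> ->. Qed.

Lemma Dist_lip x z w : e x z -> Dist x w <= Dist z w + 1.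
Proof.
case: (coordP x) => vx Vx; case: (coordP z) => vz Vz => exz.
apply: Dc_lip; apply/(edge_V vx vz); by rewrite Vx Vz.
Qed.

Lemma path_Dist s x : path e x s -> Dist x (last x s) <= size s.
Proof.
elim: s x => [|z s IH] x /=; first by rewrite /Dist Dc_refl.
move=> /andP[exz pz]; have := Dist_lip (last z s) exz; have := IH z pz; lia.
Qed.

Lemma walkb_Dist k x y : walkb e k x y -> Dist x y <= k.
Proof.
move/existsP=> [p /andP[pp /eqP ly]]; rewrite -ly; have := path_Dist pp; by rewrite size_tuple.
Qed.

Lemma neighbor i d j d' k : valid i d -> valid j d' -> Dc i d j d' = k.+1 ->
  exists i' d'', [/\ valid i' d'', adj i d i' d'' & Dc i' d'' j d' = k].
Proof.
move=> /andP[iP di] /andP[jP dj]; rewrite /Dc.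
case: (i =P j) => [ij|nij] Hk.
- subst j; case: (ltngtP d d') => h.
  + exists i, d.+1; split; first by rewrite /valid iP /=; lia.
      by apply: adjI; lia.
    by rewrite /Dc eqxx; lia.
  + exists i, d.-1; split; first by rewrite /valid iP /=; lia.
      by apply: adjI; lia.
    by rewrite /Dc eqxx; lia.
  + lia.
- case: (posnP d) => [d0|dpos].
  + subst d; case: (ltngtP i j) => h.
    * have := Lpos (i := i.+1); rewrite -/(L i.+1) => Lp.
      have Lp' : 0 < L i.+1 by apply: Lp; lia.
      exists i.+1, 0; split; first by rewrite /valid Lp' andbT; lia.
        by apply: adjI; lia.
      by rewrite /Dc; case: (i.+1 =P j) => ?; lia.
    * have Lp' : 0 < L i.-1 by apply: Lpos; lia.
      exists i.-1, 0; split; first by rewrite /valid Lp' andbT; lia.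
        by apply: adjI; lia.
      by rewrite /Dc; case: (i.-1 =P j) => ?; lia.
    * lia.
  + exists i, d.-1; split; first by rewrite /valid iP /=; lia.
      by apply: adjI; lia.
    by rewrite /Dc; case: (i =P j) => ?; lia.
Qed.

Lemma walk_ex k : forall i d j d', valid i d -> valid j d' -> Dc i d j d' = k ->
  exists s, [/\ size s = k, path e (V i d) s & last (V i d) s = V j d'].
Proof.
elim: k => [|k IH] i d j d' vi vj Hk.
- by case: (Dc0 Hk) => <- <-; exists [::].
- case: (neighbor vi vj Hk) => i' [d'' [v' a' Hk']].
  case: (IH _ _ _ _ v' vj Hk') => s [sz ps ls].
  exists (V i' d'' :: s); split => /=; first by rewrite sz.
    by rewrite ps andbT; apply/(edge_V vi v').
  exact: ls.
Qed.

Lemma walkb_V i d j d' : valid i d -> valid j d' -> walkb e (Dc i d j d') (V i d) (V j d').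
Proof.
move=> vi vj; case: (walk_ex vi vj (erefl _)) => s [sz ps ls].
by apply/existsP; exists (Tuple (introT eqP sz)); rewrite /= ps ls eqxx.
Qed.

Lemma cardT_sum : #|T| = sumn (map size P).
Proof.
rewrite cardE (perm_size (uniq_perm (enum_uniq _) Pu _)) ?size_flatten //.
by move=> x; rewrite mem_enum Pc.
Qed.

Lemma Dc_lt i d j d' : valid i d -> valid j d' -> Dc i d j d' < #|T|.
Proof.
rewrite cardT_sum /valid /L => /andP[iP di] /andP[jP dj]; rewrite /Dc.
case: (i =P j) => [ij|nij].
- subst j; have := sum_leg1_le iP; move: di dj; set Li := size (nth [::] P i); lia.
- case: (ltngtP i j) => h.
  + have := sum_leg2_le Pne h jP; move: di dj.
    set Li := size (nth [::] P i); set Lj := size (nth [::] P j); set S := sumn (map size P); lia.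
  + have := sum_leg2_le Pne h iP; move: di dj.
    set Li := size (nth [::] P i); set Lj := size (nth [::] P j); set S := sumn (map size P); lia.
  + lia.
Qed.

Lemma dist_V i d j d' : valid i d -> valid j d' -> Defs.dist e (V i d) (V j d') = Dc i d j d'.
Proof.
move=> vi vj; rewrite /Defs.dist; apply: find_first; first exact: Dc_lt.
  exact: walkb_V.
move=> k kl; apply/negP => /walkb_Dist; rewrite Dist_V //; lia.
Qed.

Lemma dist_sym x y : Defs.dist e x y = Defs.dist e y x.
Proof.
case: (coordP x) => vx <-; case: (coordP y) => vy <-.
by rewrite !dist_V // Dc_sym.
Qed.

Definition VP (p : nat * nat) := V p.1 p.2.
Definition validP (p : nat * nat) := valid p.1 p.2.

Lemma VP_inj p q : validP p -> validP q -> VP p = VP q -> p = q.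
Proof. by case: p q => [i d] [j d'] vp vq /(V_inj vp vq) /= [-> ->]. Qed.

Lemma profile_set s : uniq s -> perm_eq (profile e [set:: s]) (mp (Defs.dist e) s).
Proof.
move=> us; apply: (mp_perm dist_sym).
by apply: uniq_perm (enum_uniq _) us _ => x; rewrite mem_enum inE.
Qed.

Lemma cand_homo (idx : seq (nat * nat)) (fc : nat * nat -> nat * nat) :
  uniq idx -> uniq (map fc idx) -> (forall p, p \in idx -> validP p) ->
  (forall p, p \in idx -> validP (fc p)) ->
  (forall p q, p \in idx -> q \in idx ->
      Dc (fc p).1 (fc p).2 (fc q).1 (fc q).2 = Dc p.1 p.2 q.1 q.2) ->
  (forall p, p \in idx -> fc p \notin idx) ->
  homometric e [set:: map VP idx] [set:: map VP (map fc idx)] /\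
  #|[set:: map VP idx]| = size idx.
Proof.
move=> ui ufi vi vfi Dfc nfi.
have us : uniq (map VP idx).
  by rewrite (map_inj_in_uniq (fun p q hp hq => VP_inj (vi p hp) (vi q hq))).
have ut : uniq (map VP (map fc idx)).
  rewrite (map_inj_in_uniq _) // => p q /mapP[p' hp' ->] /mapP[q' hq' ->].
  exact: VP_inj (vfi p' hp') (vfi q' hq').
have cs : #|[set:: map VP idx]| = size idx by rewrite cardsE (card_uniqP us) size_map.
have ct : #|[set:: map VP (map fc idx)]| = size idx by rewrite cardsE (card_uniqP ut) !size_map.
split => //; rewrite /homometric; split; [|split; [by rewrite cs ct|]].
- rewrite disjoint_subset; apply/subsetP => x; rewrite !inE => /mapP[p hp ->].
  apply/negP => /mapP[q' /mapP[q hq ->] E].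
  have Epq := VP_inj (vi p hp) (vfi q hq) E.
  by move: (nfi q hq); rewrite -Epq hp.
- apply: (perm_trans (profile_set us)); rewrite perm_sym.
  apply: (perm_trans (profile_set ut)); rewrite !mp_map.
  rewrite (eq_mp_in (g := fun a b => Defs.dist e (VP a) (VP b))); first exact: perm_refl.
  move=> a b ha hb /=; rewrite /VP !dist_V; first exact: Dfc.
  all: by [apply: vfi | apply: vi].
Qed.

Definition legIdx i := [seq (i, d) | d <- iota 0 (L i %/ 2)].
Definition legF i (p : nat * nat) := (p.1, p.2 + L i %/ 2).

Lemma leg_cand i : i < size P ->
  homometric e [set:: map VP (legIdx i)] [set:: map VP (map (legF i) (legIdx i))] /\
  #|[set:: map VP (legIdx i)]| = L i %/ 2.
Proof.
move=> iP.
suff [H1 H2] : homometric e [set:: map VP (legIdx i)] [set:: map VP (map (legF i) (legIdx i))] /\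
  #|[set:: map VP (legIdx i)]| = size (legIdx i).
  by split => //; rewrite H2 /legIdx size_map size_iota.
apply: cand_homo.
- by rewrite map_inj_uniq ?iota_uniq // => a b [].
- rewrite -map_comp map_inj_uniq ?iota_uniq // => a b /= [] h; lia.
- move=> p /mapP[d]; rewrite mem_iota => /andP[_ h] ->; rewrite /validP /valid /= iP /=; lia.
- move=> p /mapP[d]; rewrite mem_iota => /andP[_ h] ->; rewrite /validP /valid /legF /= iP /=; lia.
- move=> p q /mapP[d _ ->] /mapP[d' _ ->]; rewrite /legF /Dc /= eqxx; lia.
- move=> p /mapP[d]; rewrite mem_iota => /andP[_ h] ->; apply/negP => /mapP[d'].
  rewrite mem_iota /legF => /andP[_ h'] /= [E]; lia.
Qed.

Definition shIdx s b := [seq (i, d) | i <- iota 0 (size P), d <- iota 0 (wf L (size P) s b i)].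
Definition shF s (p : nat * nat) := (p.1 + s, p.2).

Lemma mem_sh s b p : p \in shIdx s b -> exists i d,
  [/\ p = (i, d), i + s < size P, odd (i %/ s) = b & d < minn (L i) (L (i + s))].
Proof.
move/allpairsPdep => [i [d [hi hd ->]]]; move: hd; rewrite mem_iota /wf.
case: ifP => [/andP[c1 /eqP c2]|_] /andP[_ h]; last by lia.
by exists i, d; split.
Qed.

Lemma sh_cand s b : 0 < s ->
  homometric e [set:: map VP (shIdx s b)] [set:: map VP (map (shF s) (shIdx s b))] /\
  #|[set:: map VP (shIdx s b)]| = \sum_(i < size P) wf L (size P) s b i.
Proof.
move=> s0.
suff [H1 H2] : homometric e [set:: map VP (shIdx s b)] [set:: map VP (map (shF s) (shIdx s b))] /\
  #|[set:: map VP (shIdx s b)]| = size (shIdx s b).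
  split => //; rewrite H2 /shIdx size_allpairs_dep.
  rewrite (eq_map (g := wf L (size P) s b)); last by move=> i; rewrite size_iota.
  by rewrite sumnE big_map -(big_mkord xpredT (wf L (size P) s b)) /index_iota subn0.
have ui : uniq (shIdx s b).
  apply: allpairs_uniq_dep; [exact: iota_uniq | by move=> i _; exact: iota_uniq | ].
  move=> [x1 y1] [x2 y2] _ _ [] /= E1; subst x2 => E2; by rewrite E2.
apply: cand_homo => //.
- rewrite (map_inj_uniq (f := shF s)) // => [[a1 a2] [c1 c2]] [h1 h2]; congr pair; lia.
- move=> p /mem_sh [i [d [-> h1 h2 h3]]]; rewrite /validP /valid /=; apply/andP; split; lia.
- move=> p /mem_sh [i [d [-> h1 h2 h3]]]; rewrite /validP /valid /shF /=; apply/andP; split; lia.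
- move=> p q /mem_sh [i [d [-> _ _ _]]] /mem_sh [i' [d' [-> _ _ _]]].
  rewrite /shF /Dc /=; case: (i + s =P i' + s) => ?; case: (i =P i') => ?; lia.
- move=> p /mem_sh [i [d [-> h1 h2 h3]]]; apply/negP => /mem_sh [i' [d' [E h1' h2' h3']]].
  case: E => Ei Ed; subst i'.
  have ed : (i + s) %/ s = (i %/ s).+1 by rewrite -[X in (i + X) %/ _]mul1n addnC divnMDl.
  by move: h2'; rewrite ed oddS h2; case: (b).
Qed.

Lemma sum_sizes : sumn (map size P) = \sum_(i < size P) L i.
Proof. by rewrite sumnE big_map (big_nth [::]) big_mkord. Qed.

End HC.

Lemma argmax (A : eqType) (f : A -> nat) (s : seq A) : s != [::] ->
  exists2 a, a \in s & forall b, b \in s -> f b <= f a.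
Proof.
elim: s => [|x s IH] // _; case: (s =P [::]) => [->|/eqP sn].
  by exists x; rewrite ?mem_head // => b; rewrite inE => /eqP->.
case: (IH sn) => a ain amax.
case: (leqP (f a) (f x)) => h.
- exists x; first exact: mem_head.
  by move=> b; rewrite inE => /orP[/eqP->//|/amax bs]; apply: leq_trans h.
- exists a; first by rewrite inE ain orbT.
  by move=> b; rewrite inE => /orP[/eqP->|/amax //]; exact: ltnW.
Qed.

Theorem theorem2 :
  exists c : R, (0 < c)%R /\
    forall (T : finType) (e : rel T),
      haircomb e -> 2 <= #|T| ->
      exists A B : {set T},
        homometric e A B /\
        (c * Rpower (INR #|T|) (2 / 3) <= INR #|A|)%R /\
        (c * Rpower (INR #|T|) (2 / 3) <= INR #|B|)%R.
Proof.
exists (1 / 5)%R; split; first lra.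
move=> T e [P [Pn Pne Pu Pc He]] n2.
have [x0 _] : exists x : T, true.
  case: P Pn Pne {Pu Pc He} => [//|[|x l] P'] _ /=; first by [].
  by move=> _; exists x.
set m := size P.
have m0 : 0 < m by rewrite /m lt0n size_eq0.
pose cs := [seq (0, i, true) | i <- iota 0 m] ++
           [seq (1, s, b) | s <- iota 1 (m - 1), b <- [:: true; false]].
pose csz (c : nat * nat * bool) :=
  if c.1.1 == 0 then L P c.1.2 %/ 2 else \sum_(i < m) wf (L P) m c.1.2 c.2 i.
have csn : cs != [::].
  by rewrite /cs; case: (m) m0 => //= m' _; rewrite cat_cons.
case: (argmax csz csn) => c cin cmax.
set X := csz c.
have legs : forall i, i < m -> L P i %/ 2 <= X.
  move=> i im; have := cmax (0, i, true); rewrite /csz /=; apply.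
  by rewrite mem_cat; apply/orP; left; apply/mapP; exists i; rewrite ?mem_iota.
have shs : forall s b, 0 < s -> s < m -> \sum_(i < m) wf (L P) m s b i <= X.
  move=> s b s0 sm; have := cmax (1, s, b); rewrite /csz /=; apply.
  rewrite mem_cat; apply/orP; right; apply: (allpairs_f (fun s b => (1, s, b))).
    by rewrite mem_iota; lia.
  by case: b.
have Lp : forall i, i < m -> 0 < L P i by move=> i im; exact: Lpos.
have nE : #|T| = \sum_(i < m) L P i by rewrite (cardT_sum Pu Pc) sum_sizes.
have key := arith_bound m0 Lp legs shs nE.
have RB := real_bound n2 key.
suff [A [B [hAB cA]]] : exists A B : {set T}, homometric e A B /\ #|A| = X.
  exists A, B; split => //; case: hAB => _ [cAB _]; rewrite -cAB cA; by split.
move: cin; rewrite mem_cat => /orP[/mapP[i]|].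
- rewrite mem_iota => /andP[_ im] Ec.
  have [h1 h2] := leg_cand x0 Pne Pu Pc He (i := i) ltac:(lia).
  eexists; eexists; split; first exact: h1.
  by rewrite h2 /X Ec.
- move/allpairsPdep => [s [b [sin _ Ec]]]; move: sin; rewrite mem_iota => /andP[s1 _].
  have [h1 h2] := sh_cand x0 Pne Pu Pc He b s1.
  eexists; eexists; split; first exact: h1.
  by rewrite h2 /X Ec.
Qed.
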